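(* Let $S$ be an additive numerical semigroup with multiplicity $e$ whose blowup $B$ is symmetric. Then ${\rm d}_{\max}(S)=d(F(B)+e;B^{\mathcal D})$.
   Context: $S$ is a numerical semigroup (a submonoid of $\mathbb N$ with finite complement) with minimal generators $e<a_1<\dots<a_t$. An $S$-factorization of $n$ is $(c_0,\dots,c_t)\in\mathbb N^{t+1}$ with $c_0e+\sum c_ia_i=n$, of length $\sum c_i$. ${\rm ord}(n;S)$ is the maximal such length, ${\rm d}_{\max}(n;S)$ is the number of factorizations of maximal length, and ${\rm d}_{\max}(S)=\max_{n\in S}{\rm d}_{\max}(n;S)$. $S$ is additive if ${\rm ord}(u+e;S)={\rm ord}(u;S)+1$ for all $u\in S$. The blowup is $B=\langle e,d_1,\dots,d_t\rangle$ with $d_i=a_i-e$, and $\mathcal D=(e,d_1,\dots,d_t)$. $d(b;B^{\mathcal D})$ is the number of tuples $(x_0,\dots,x_t)\in\mathbb N^{t+1}$ with $x_0e+\sum x_id_i=b$. The Frobenius number $F(T)$ is the largest integer not in $T$ (so $F(\mathbb N)=-1$). $T$ is symmetric if, whenever $x+y=F(T)$ with $x,y\in\mathbb Z$, exactly one of $x,y$ lies in $T$. *)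

(* Defs.v *)
From mathcomp Require Import all_boot all_order all_algebra.
Set Implicit Arguments. Unset Strict Implicit. Unset Printing Implicit Defensive.
Import Order.TTheory GRing.Theory Num.Theory.

Definition inSg (g : seq nat) (n : nat) : Prop :=
  exists c : 'I_(size g) -> nat, \sum_(i < size g) c i * nth 0 g i = n.

Definition inZ (T : nat -> Prop) (x : int) : Prop :=
  match x with Posz n => T n | Negz _ => False end.

Definition min_gens (g : seq nat) : Prop :=
  [/\ g != [::], sorted ltn g, 0 < head 0 g,
      (exists N, forall n, N <= n -> inSg g n) &
      forall i : 'I_(size g), ~ exists c : 'I_(size g) -> nat,
          c i = 0 /\ \sum_(j < size g) c j * nth 0 g j = nth 0 g i].

Definition mult (g : seq nat) : nat := head 0 g.

(* Factorizations of n w.r.t. the tuple g (all entries of g are assumed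
   positive, so every coefficient is at most n). *)
Definition facts (g : seq nat) (n : nat) : {set {ffun 'I_(size g) -> 'I_n.+1}} :=
  [set c : {ffun 'I_(size g) -> 'I_n.+1} | \sum_(i < size g) (c i : nat) * nth 0 g i == n].

Definition flen (k n : nat) (c : {ffun 'I_k -> 'I_n.+1}) : nat :=
  \sum_(i < k) (c i : nat).

Definition ordS (g : seq nat) (n : nat) : nat :=
  \max_(c in facts g n) flen c.

Definition dmax_n (g : seq nat) (n : nat) : nat :=
  #|[set c in facts g n | flen c == ordS g n]|.

Definition additiveNS (g : seq nat) : Prop :=
  forall u, inSg g u -> ordS g (u + mult g) = (ordS g u).+1.

Definition blowD (g : seq nat) : seq nat :=
  mult g :: [seq a - mult g | a <- behead g].

Definition dD (g : seq nat) (b : nat) : nat := #|facts (blowD g) b|.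

Definition frobenius (T : nat -> Prop) (f : int) : Prop :=
  ~ inZ T f /\ forall m : int, (f < m)%R -> inZ T m.

Definition symmetricNS (T : nat -> Prop) : Prop :=
  exists f, frobenius T f /\
    forall x y : int, (x + y)%R = f -> (inZ T x <-> ~ inZ T y).

(* Main.v *)
Require Import Defs.
From mathcomp Require Import all_boot all_order all_algebra.
Import Order.TTheory GRing.Theory Num.Theory.
From mathcomp Require Import zify.
From Stdlib Require Import Classical.


Lemma sum_ord_nat k (F : 'I_k.+1 -> nat) :
  \sum_(i < k.+1) F i = \sum_(0 <= j < k.+1) F (inord j).
Proof. by rewrite big_mkord; apply: eq_bigr => i _; rewrite inord_val. Qed.

Lemma term_le_sum n (F : nat -> nat) j : j < n -> F j <= \sum_(0 <= i < n) F i.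
Proof.
move=> hj; rewrite big_mkord (bigD1 (Ordinal hj)) //=; exact: leq_addr.
Qed.

Lemma build_ffun k n (u : nat -> nat) : (forall j, j < k.+1 -> u j <= n) ->
  exists c : {ffun 'I_k.+1 -> 'I_n.+1}, forall j, j < k.+1 -> val (c (inord j)) = u j.
Proof.
move=> hu; exists [ffun i : 'I_k.+1 => inord (u i) : 'I_n.+1] => j hj.
by rewrite ffunE /= inordK // inordK // ltnS hu.
Qed.

Lemma facts_mem x s n (c : {ffun 'I_(size (x::s)) -> 'I_n.+1}) :
  (c \in facts (x::s) n) =
  (\sum_(0 <= j < (size s).+1) val (c (inord j)) * nth 0 (x::s) j == n).
Proof.
rewrite inE sum_ord_nat; congr (_ == _); apply: eq_big_nat => j /andP[_ hj].
by rewrite inordK.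
Qed.

Lemma flen_nat k n (c : {ffun 'I_k.+1 -> 'I_n.+1}) :
  flen c = \sum_(0 <= j < k.+1) val (c (inord j)).
Proof. by rewrite /flen sum_ord_nat. Qed.

Lemma inSg_nat x s n : inSg (x::s) n <->
  exists u : nat -> nat, \sum_(0 <= j < (size s).+1) u j * nth 0 (x::s) j = n.
Proof.
split.
  move=> [c hc]; exists (fun j => c (inord j)); rewrite -hc sum_ord_nat.
  apply: eq_big_nat => j /andP[_ hj]; by rewrite inordK.
move=> [u hu]; exists (fun i => u i); rewrite -hu sum_ord_nat.
apply: eq_big_nat => j /andP[_ hj]; by rewrite inordK.
Qed.

Lemma card_le_gen k n k' m (A : {set {ffun 'I_k.+1 -> 'I_n.+1}})
  (B : {set {ffun 'I_k'.+1 -> 'I_m.+1}}) (G : {ffun 'I_k.+1 -> 'I_n.+1} -> nat -> nat) :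
  (forall c j, c \in A -> j < k'.+1 -> G c j <= m) ->
  (forall c (d : {ffun 'I_k'.+1 -> 'I_m.+1}), c \in A ->
      (forall j, j < k'.+1 -> val (d (inord j)) = G c j) -> d \in B) ->
  (forall c c', c \in A -> c' \in A -> (forall j, j < k'.+1 -> G c j = G c' j) -> c = c') ->
  #|A| <= #|B|.
Proof.
move=> hb hm hi.
pose F c := [ffun i : 'I_k'.+1 => inord (G c i) : 'I_m.+1].
have hF : forall c j, c \in A -> j < k'.+1 -> val (F c (inord j)) = G c j.
  by move=> c j hc hj; rewrite ffunE /= inordK // inordK // ltnS hb.
rewrite -(card_in_imset (f := F)); last first.
  move=> c c' hc hc' e; apply: (hi c c' hc hc') => j hj.
  by rewrite -hF // -(hF c' j) // e.
apply: subset_leq_card; apply/subsetP => d /imsetP[c hc ->].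
by apply: (hm _ _ hc) => j hj; rewrite hF.
Qed.

Definition hh e (A : seq nat) j := nth 0 (e::A) j - e.
Definition goodg e (A : seq nat) := 0 < e /\ all (fun a => e < a) A.
Definition SG e A (u : nat -> nat) := \sum_(0 <= j < (size A).+1) u j * nth 0 (e::A) j.
Definition SD e A (u : nat -> nat) := \sum_(0 <= j < (size A).+1) u j * nth 0 (blowD (e::A)) j.
Definition Ln (A : seq nat) (u : nat -> nat) := \sum_(0 <= j < (size A).+1) u j.
Definition Tl (A : seq nat) (u : nat -> nat) := \sum_(0 <= j < size A) u j.+1.
Definition W e A (u : nat -> nat) := \sum_(0 <= j < (size A).+1) u j * hh e A j.

Lemma nthG e A j : goodg e A -> j < (size A).+1 -> nth 0 (e::A) j = e + hh e A j.
Proof.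
move=> [he hall]; case: j => [|j] hj; first by rewrite /hh /= subnn addn0.
rewrite /hh /=; have := (allP hall) _ (mem_nth 0 hj) => /= h.
by rewrite subnKC // ltnW.
Qed.

Lemma hh_pos e A j : goodg e A -> 0 < j < (size A).+1 -> 0 < hh e A j.
Proof.
move=> [he hall]; case: j => [|j] // /andP[_ hj].
rewrite /hh /= subn_gt0; exact: (allP hall) _ (mem_nth 0 hj).
Qed.

Lemma nthD e A j : nth 0 (blowD (e::A)) j = if j == 0 then e else hh e A j.
Proof.
case: j => [|j] //=; rewrite /hh /=.
case: (ltnP j (size A)) => h; first by rewrite (nth_map 0).
by rewrite !nth_default ?size_map.
Qed.

Lemma Ln_split A u : Ln A u = u 0 + Tl A u.
Proof. by rewrite /Ln big_nat_recl. Qed.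

Lemma W_tail e A u : W e A u = \sum_(0 <= j < size A) u j.+1 * hh e A j.+1.
Proof. by rewrite /W big_nat_recl // /hh /= subnn muln0. Qed.

Lemma W_eq e A u v : (forall j, 0 < j < (size A).+1 -> u j = v j) -> W e A u = W e A v.
Proof.
move=> h; rewrite !W_tail; apply: eq_big_nat => j /andP[_ hj]; by rewrite h.
Qed.

Lemma Tl_eq A u v : (forall j, 0 < j < (size A).+1 -> u j = v j) -> Tl A u = Tl A v.
Proof.
move=> h; rewrite /Tl; apply: eq_big_nat => j /andP[_ hj]; by rewrite h.
Qed.

Lemma W_add e A u v : W e A (fun j => u j + v j) = W e A u + W e A v.
Proof. by rewrite /W -big_split; apply: eq_bigr => j _; rewrite mulnDl. Qed.

Lemma Tl_le_W e A u : goodg e A -> Tl A u <= W e A u.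
Proof.
move=> hg; rewrite W_tail /Tl !big_mkord; apply: leq_sum => i _.
by rewrite leq_pmulr // hh_pos //= ltnS ltn_ord.
Qed.

Lemma SG_split e A u : goodg e A -> SG e A u = Ln A u * e + W e A u.
Proof.
move=> hg; rewrite /SG /Ln /W big_distrl -big_split /=.
by apply: eq_big_nat => j /andP[_ hj]; rewrite nthG // mulnDr mulnC.
Qed.

Lemma SD_split e A u : SD e A u = u 0 * e + W e A u.
Proof.
rewrite /SD W_tail big_nat_recl //; congr (_ + _).
by apply: eq_big_nat => j _; rewrite nthD.
Qed.

Lemma SG_bound e A u n j : goodg e A -> SG e A u = n -> j < (size A).+1 -> u j <= n.
Proof.
move=> hg <- hj; rewrite /SG /SD; apply: (leq_trans _ (@term_le_sum _ (fun j => u j * nth 0 (e::A) j) _ hj)).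
by rewrite leq_pmulr // nthG // ltn_addr //; case: hg.
Qed.

Lemma SD_bound e A u n j : goodg e A -> SD e A u = n -> j < (size A).+1 -> u j <= n.
Proof.
move=> hg <- hj; rewrite /SG /SD; apply: (leq_trans _ (@term_le_sum _ (fun j => u j * nth 0 (blowD (e::A)) j) _ hj)).
rewrite leq_pmulr // nthD; case: eqP => [_|/eqP j0]; first by case: hg.
by rewrite hh_pos // lt0n j0.
Qed.

Lemma ordS_ge e A u n : goodg e A -> SG e A u = n -> Ln A u <= Defs.ordS (e::A) n.
Proof.
move=> hg hu.
have [c hc] := build_ffun (size A) n u (fun j hj => @SG_bound e A u n j hg hu hj).
have mem : c \in facts (e::A) n.
  rewrite facts_mem; apply/eqP; apply: (etrans _ hu); apply: eq_big_nat => j /andP[_ hj].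
  by rewrite hc.
apply: (leq_trans _ (leq_bigmax_cond _ mem)); rewrite flen_nat.
by apply/eq_leq/eq_big_nat => j /andP[_ hj]; rewrite hc.
Qed.

Lemma ordS_att e A n : goodg e A -> inSg (e::A) n ->
  exists u, SG e A u = n /\ Ln A u = Defs.ordS (e::A) n.
Proof.
move=> hg /inSg_nat [u hu].
have [c hc] := build_ffun (size A) n u (fun j hj => @SG_bound e A u n j hg hu hj).
have mem : c \in facts (e::A) n.
  rewrite facts_mem; apply/eqP; apply: (etrans _ hu); apply: eq_big_nat => j /andP[_ hj].
  by rewrite hc.
have hpos : 0 < #|facts (e::A) n| by apply/card_gt0P; exists c.
rewrite /Defs.ordS; have [c0 hc0 ->] := eq_bigmax_cond (@flen _ n) hpos.
exists (fun j => val (c0 (inord j))); split; last by rewrite flen_nat.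
by move: hc0; rewrite facts_mem => /eqP.
Qed.

Lemma inSg_adde e A n : inSg (e::A) n -> inSg (e::A) (n + e).
Proof.
move=> /inSg_nat [u hu]; apply/inSg_nat.
exists (fun j => if j == 0 then u 0 + 1 else u j).
by rewrite big_nat_recl // -hu big_nat_recl //= mulnDl mul1n addnAC.
Qed.

Lemma inSg_addKe e A n K : inSg (e::A) n -> inSg (e::A) (n + K * e).
Proof.
move=> h; elim: K => [|K IH]; first by rewrite addn0.
by rewrite mulSnr addnA; apply: inSg_adde.
Qed.

Lemma ord_iter e A n K : additiveNS (e::A) -> inSg (e::A) n ->
  Defs.ordS (e::A) (n + K * e) = Defs.ordS (e::A) n + K.
Proof.
move=> hadd h; elim: K => [|K IH]; first by rewrite !addn0.
rewrite mulSnr addnA; have := hadd _ (@inSg_addKe e A n K h); rewrite /mult /= => ->.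
by rewrite IH addnS.
Qed.

Lemma factsG_mem e A n (c : {ffun 'I_(size (e::A)) -> 'I_n.+1}) (u : nat -> nat) :
  (forall j, j < (size A).+1 -> val (c (inord j)) = u j) -> SG e A u = n ->
  c \in facts (e::A) n.
Proof.
move=> hc hu; rewrite facts_mem; apply/eqP; apply: (etrans _ hu).
by apply: eq_big_nat => j /andP[_ hj]; rewrite hc.
Qed.

Lemma factsG_val e A n (c : {ffun 'I_(size (e::A)) -> 'I_n.+1}) :
  c \in facts (e::A) n -> SG e A (fun j => val (c (inord j))) = n.
Proof. by rewrite facts_mem => /eqP. Qed.

Lemma flen_Ln e A n (c : {ffun 'I_(size (e::A)) -> 'I_n.+1}) :
  flen c = Ln A (fun j => val (c (inord j))).
Proof. by rewrite flen_nat. Qed.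

Lemma sizeD e A : size (blowD (e::A)) = (size A).+1.
Proof. exact: (congr1 S (size_map (fun a => a - e) A)). Qed.

Lemma sum_range_eq n n' (F : nat -> nat) : n = n' ->
  \sum_(0 <= j < n) F j = \sum_(0 <= j < n') F j.
Proof. by move=> ->. Qed.

Lemma factsD_mem e A m (d : {ffun 'I_(size (blowD (e::A))) -> 'I_m.+1}) (u : nat -> nat) :
  (forall j, j < (size A).+1 -> val (d (inord j)) = u j) -> SD e A u = m ->
  d \in facts (blowD (e::A)) m.
Proof.
move=> hd hu; rewrite inE sum_ord_nat; apply/eqP; apply: (etrans _ hu).
rewrite /SD.
transitivity (\sum_(0 <= j < (size (blowD (e::A)))) u j * nth 0 (blowD (e::A)) j).
  apply: eq_big_nat => j /andP[_ hj]; rewrite inordK // hd //.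
  by rewrite -(sizeD e).
by rewrite sizeD.
Qed.

Lemma factsD_val e A m (d : {ffun 'I_(size (blowD (e::A))) -> 'I_m.+1}) :
  d \in facts (blowD (e::A)) m -> SD e A (fun j => val (d (inord j))) = m.
Proof.
rewrite inE sum_ord_nat => /eqP h; apply: (etrans _ h); rewrite /SD.
transitivity (\sum_(0 <= j < (size (blowD (e::A)))) val (d (inord j)) * nth 0 (blowD (e::A)) j).
  by apply: sum_range_eq; rewrite sizeD.
apply: eq_big_nat => j /andP[_ hj]; by rewrite (inordK hj).
Qed.

Lemma inSgD_nat e A m : inSg (blowD (e::A)) m <-> exists u, SD e A u = m.
Proof.
rewrite /blowD /mult /= inSg_nat /SD /blowD /mult /= size_map; split => //.
Qed.

Lemma inSgG_nat e A m : inSg (e::A) m <-> exists u, SG e A u = m.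
Proof. exact: inSg_nat. Qed.

Lemma good_of_min e A : min_gens (e::A) -> goodg e A.
Proof.
case=> _ hs hh _ _; split => //; exact: (order_path_min ltn_trans hs).
Qed.

Lemma inZ_ge0 (T : nat -> Prop) (x : int) : inZ T x -> (0 <= x)%R.
Proof. by case: x. Qed.

Lemma frob_uniq T f f' : frobenius T f -> frobenius T f' -> f = f'.
Proof.
move=> [h1 h2] [h1' h2']; case: (ltgtP f f') => // h.
  by case: h1'; apply: h2.
by case: h1; apply: h2'.
Qed.

Arguments ordS_att {e A n}. Arguments ordS_ge {e A u n}. Arguments SG_split {e A u}.
Arguments SG_bound {e A u n j}. Arguments SD_bound {e A u n j}. Arguments factsG_val {e A n c}.
Arguments factsD_val {e A m d}. Arguments factsG_mem {e A n c u}.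
Arguments factsD_mem {e A m d u}. Arguments Tl_le_W {e A u}. Arguments Tl_eq {A u v}.
Arguments W_eq {e A u v}. Arguments ord_iter {e A n} K.

Lemma ltD e A j : j < (size [seq a - e | a <- A]).+1 -> j < (size A).+1.
Proof. by rewrite size_map. Qed.

Lemma ltD' e A j : j < (size A).+1 -> j < (size [seq a - e | a <- A]).+1.
Proof. by rewrite size_map. Qed.

Lemma Ln_eq A u v : (forall j, j < (size A).+1 -> u j = v j) -> Ln A u = Ln A v.
Proof. move=> h; apply: eq_big_nat => j /andP[_ hj]; exact: h. Qed.

Lemma part2 e A (f : int) b n :
  goodg e A -> additiveNS (e::A) ->
  (forall x y : int, (x + y)%R = f ->
     (inZ (inSg (blowD (e::A))) x <-> ~ inZ (inSg (blowD (e::A))) y)) ->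
  Posz b = (f + Posz e)%R -> inSg (e::A) n -> dmax_n (e::A) n <= dD (e::A) b.
Proof.
move=> hg hadd hsym hb hn.
have [u [hu hl]] := ordS_att hg hn.
set l := Defs.ordS (e::A) n in hl *.
have hn' : n = l * e + W e A u by rewrite -hu SG_split // hl.
set beta := W e A u in hn'.
have nA : forall y, SD e A y + e <> beta.
  move=> y hy.
  pose K := Ln A y.
  pose v := fun j => if j == 0 then l + K + 1 + y 0 - Tl A y else y j.
  have hT : Tl A v = Tl A y by apply: Tl_eq => -[|j].
  have TK : Tl A y <= K by rewrite /K Ln_split leq_addl.
  have hLv : Ln A v = l + K + 1 + y 0 by rewrite Ln_split hT /v /=; lia.
  have hWv : W e A v = W e A y by apply: W_eq => -[|j].
  have hSv : SG e A v = n + K * e.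
    rewrite SG_split // hLv hWv hn'; move: hy; rewrite SD_split => hy.
    rewrite -hy !mulnDl mul1n; lia.
  have := ordS_ge hg hSv; rewrite hLv ord_iter // -/l; lia.
have nx : ~ inZ (inSg (blowD (e::A))) (Posz beta - Posz e)%R.
  case: (leqP e beta) => h.
    rewrite subzn //= => /inSgD_nat [y hy]; apply: (nA y); rewrite hy subnK //.
  move=> /inZ_ge0; lia.
have hin : inZ (inSg (blowD (e::A))) (f - (Posz beta - Posz e))%R.
  apply: NNPP => hn2; apply: nx.
  by apply/(hsym _ (f - (Posz beta - Posz e))%R); first by rewrite addrC subrK.
have hy' : (f - (Posz beta - Posz e) = Posz b - Posz beta)%R by lia.
rewrite hy' in hin.
have hbb : beta <= b by have := inZ_ge0 _ _ hin; lia.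
rewrite subzn // /= in hin.
have [r hr] := (inSgD_nat e A (b - beta)).1 hin.
have key : forall c, c \in [set c in facts (e::A) n | flen c == Defs.ordS (e::A) n] ->
    SD e A (fun j => (if j == 0 then 0 else val (c (inord j))) + r j) = b.
  move=> c; rewrite inE => /andP[hc /eqP hfl].
  have h1 := factsG_val hc.
  have h2 : Ln A (fun j => val (c (inord j))) = l by rewrite -flen_Ln hfl.
  have hw : W e A (fun j => val (c (inord j))) = beta.
    by move: h1; rewrite SG_split // h2 => h1; apply/eqP; rewrite -(eqn_add2l (l * e)) h1 -hn'.
  rewrite SD_split W_add.
  have -> : W e A (fun j => if j == 0 then 0 else val (c (inord j))) =
            W e A (fun j => val (c (inord j))) by apply: W_eq => -[|j].
  rewrite hw; move: hr; rewrite SD_split /=; lia.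
rewrite /dmax_n /dD.
apply: (@card_le_gen _ _ _ _ _ _
   (fun c j => (if j == 0 then 0 else val (c (inord j))) + r j)).
- move=> c j hc hj; apply: (SD_bound hg (key c hc)).
  exact: (@ltD e A j hj).
- move=> c d hc hd; apply: (factsD_mem _ (key c hc)) => j hj; apply: hd.
  exact: (@ltD' e A j hj).
- move=> c c' hc hc' hG.
  have hL : forall c, c \in [set c in facts (e::A) n | flen c == Defs.ordS (e::A) n] ->
       Ln A (fun j => val (c (inord j))) = l.
    by move=> c0; rewrite inE => /andP[_ /eqP hfl]; rewrite -flen_Ln hfl.
  have hpos : forall j, 0 < j < (size A).+1 -> val (c (inord j)) = val (c' (inord j)).
    move=> [|j] // /andP[_ hj]; have := hG j.+1 (@ltD' e A j.+1 hj); rewrite /=.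
    by move/addIn.
  have h0 : val (c (inord 0)) = val (c' (inord 0)).
    have hT : Tl A (fun j => val (c (inord j))) = Tl A (fun j => val (c' (inord j))) := Tl_eq hpos.
    have := hL _ hc; have := hL _ hc'; rewrite !Ln_split hT => h1 h2.
    by apply/eqP; rewrite -(eqn_add2r (Tl A (fun j => val (c' (inord j))))) h1 h2.
  have hall : forall j, j < (size A).+1 -> val (c (inord j)) = val (c' (inord j)).
    by move=> [|j] hj //; apply: hpos.
  apply/ffunP => i; apply: val_inj.
  by have := hall i (ltn_ord i); rewrite inord_val.
Qed.

Lemma part1 e A (f : int) b :
  goodg e A -> frobenius (inSg (blowD (e::A))) f -> Posz b = (f + Posz e)%R ->
  (forall n, inSg (e::A) n -> dmax_n (e::A) n <= dD (e::A) b) ->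
  exists n, inSg (e::A) n /\ dmax_n (e::A) n = dD (e::A) b.
Proof.
move=> hg [hf1 hf2] hb p2.
have he : 0 < e by case: hg.
have hbB : inSg (blowD (e::A)) b by apply: (hf2 (Posz b)); lia.
have nA : forall y, SD e A y + e <> b.
  move=> y hy; apply: hf1.
  have -> : f = Posz (SD e A y) by lia.
  by apply/inSgD_nat; exists y.
have x0 : forall x, SD e A x = b -> x 0 = 0.
  move=> x hx; case h0: (x 0) => [//|k]; exfalso.
  apply: (nA (fun j => if j == 0 then k else x j)).
  rewrite SD_split /= (W_eq (v := x)); last by move=> [|j].
  by move: hx; rewrite SD_split h0 mulSn; lia.
have [x hx] := (inSgD_nat e A b).1 hbB.
pose v := fun j => if j == 0 then b - Tl A x else x j.
have hTx : Tl A x <= b.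
  apply: leq_trans (Tl_le_W hg) _; rewrite -hx SD_split; exact: leq_addl.
have hLv : Ln A v = b.
  rewrite Ln_split (Tl_eq (v := x)); last by move=> [|j].
  rewrite /v /=; lia.
have hSv : SG e A v = b * e + b.
  rewrite SG_split // hLv (W_eq (v := x)); last by move=> [|j].
  by have hx2 := hx; move: hx2; rewrite SD_split (x0 x hx) mul0n add0n => ->.
set n := b * e + b.
have hn : inSg (e::A) n by apply/inSgG_nat; exists v; exact: hSv.
have hord : Defs.ordS (e::A) n = b.
  apply/eqP; rewrite eqn_leq; apply/andP; split; last by rewrite -{1}hLv ordS_ge.
  have [u' [hu' hl']] := ordS_att hg hn.
  case: (leqP (Defs.ordS (e::A) n) b) => // hgt; exfalso.
  set o := Defs.ordS (e::A) n in hl' hgt.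
  have [m hm] : exists m, o = b.+1 + m by exists (o - b.+1); lia.
  apply: (nA (fun j => if j == 0 then m else u' j)).
  rewrite SD_split /= (W_eq (v := u')); last by move=> [|j].
  move: hu'; rewrite SG_split // hl' hm /n !mulnDl mulSn; lia.
exists n; split => //.
apply/eqP; rewrite eqn_leq p2 //=.
rewrite /dmax_n /dD.
have key : forall d, d \in facts (blowD (e::A)) b ->
   SG e A (fun j => if j == 0 then b - Tl A (fun j => val (d (inord j))) else val (d (inord j))) = n /\
   Ln A (fun j => if j == 0 then b - Tl A (fun j => val (d (inord j))) else val (d (inord j))) = b.
  move=> d hd; have hs := factsD_val hd.
  have h0 := x0 _ hs.
  have hT : Tl A (fun j => val (d (inord j))) <= b.
    apply: leq_trans (Tl_le_W hg) _; apply: (leq_trans _ (eq_leq hs)); rewrite SD_split; exact: leq_addl.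
  have hL : Ln A (fun j => if j == 0 then b - Tl A (fun j => val (d (inord j))) else val (d (inord j))) = b.
    rewrite Ln_split (Tl_eq (v := fun j => val (d (inord j)))); last by move=> [|j].
    by rewrite /= subnK.
  split => //.
  rewrite SG_split // hL (W_eq (v := fun j => val (d (inord j)))); last by move=> [|j].
  by move: hs; rewrite SD_split h0 mul0n add0n => ->.
apply: (@card_le_gen _ _ _ _ _ _
   (fun d j => if j == 0 then b - Tl A (fun j => val (d (inord j))) else val (d (inord j)))).
- move=> d j hd hj; apply: (SG_bound hg (key d hd).1 hj).
- move=> c d hc hd; rewrite inE; apply/andP; split.
    exact: (factsG_mem hd (key c hc).1).
  rewrite hord flen_Ln (Ln_eq _ _ _ hd); exact/eqP/(key c hc).2.
- move=> c c' hc hc' hG.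
  have h0 : forall c, c \in facts (blowD (e::A)) b -> val (c (inord 0)) = 0.
    by move=> c0 hc0; apply: (x0 _ (factsD_val hc0)).
  have hall : forall j, j < (size A).+1 -> val (c (inord j)) = val (c' (inord j)).
    move=> [|j] hj; first by rewrite h0 // h0.
    by have := hG j.+1 hj.
  apply/ffunP => i; apply: val_inj.
  have hi : i < (size A).+1 by rewrite -(sizeD e); exact: ltn_ord.
  by have := hall i hi; rewrite inord_val.
Qed.

Theorem corollary4p9 (g : seq nat) (f : int) (b : nat) :
  min_gens g -> additiveNS g ->
  symmetricNS (inSg (blowD g)) ->
  frobenius (inSg (blowD g)) f ->
  Posz b = (f + Posz (mult g))%R ->
  (exists n, inSg g n /\ dmax_n g n = dD g b) /\
  (forall n, inSg g n -> dmax_n g n <= dD g b).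
Proof.
case: g => [|e A] hmin; first by case: hmin => /negP [].
move=> hadd [f' [hf' hsym]] hf hb.
have hg := good_of_min _ _ hmin.
have ef : f' = f := frob_uniq _ _ _ hf' hf.
subst f'.
rewrite /mult /= in hb.
have p2 := fun n hn => @part2 e A f b n hg hadd hsym hb hn.
split; last exact: p2.
exact: (@part1 e A f b hg hf hb p2).
Qed.
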